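(* Let $M$ be an $L$-structure, $G$ a group definable in $M$, and assume every complete type in $S_{G}(M)$ is definable. Then $G$ is definably extremely amenable if and only if for every definable left generic subset $Y$ of $G$ we have $YY^{-1}=G$.
   Context: $S_{G}(M)$ is the Stone space of complete types over $M$ containing the formula defining $G$. A type $p\in S(M)$ is definable if for every $L$-formula $\varphi(x,y)$, $\{b\in M:\varphi(x,b)\in p\}$ is definable in $M$. ''Definable'' means definable in $M$ with parameters from $M$. For a compact Hausdorff space $C$, a map $f\colon G\to C$ is definable if for any disjoint closed $C_{1},C_{2}\subseteq C$ there is a definable $Y'\subseteq G$ with $f^{-1}(C_{1})\subseteq Y'$ and $Y'\cap f^{-1}(C_{2})=\emptyset$. A definable $G$-flow is a compact Hausdorff space $X$ with an action of $G$ by homeomorphisms such that for each $x\in X$ the map $g\mapsto g\cdot x$ from $G$ to $X$ is definable. $G$ is definably extremely amenable if every definable $G$-flow $X$ has a point fixed by all of $G$. A definable subset $Y\subseteq G$ is left generic if finitely many left translates $g_{1}Y,\dots,g_{k}Y$ ($g_{i}\in G$) cover $G$. *)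

(* Defs.v *)
From mathcomp Require Import all_boot.
From mathcomp Require Import boolp classical_sets topology.

Set Implicit Arguments.
Unset Strict Implicit.
Unset Printing Implicit Defensive.

Local Open Scope classical_set_scope.

Record language := Language {
  func : Type;
  rel : Type;
  farity : func -> nat;
  rarity : rel -> nat }.

Record structure (L : language) := Structure {
  carrier :> Type;
  ifunc : forall f : func L, ('I_(farity f) -> carrier) -> carrier;
  irel : forall r : rel L, ('I_(rarity r) -> carrier) -> Prop }.

Section Syntax.
Variables (L : language) (M : structure L).

(* Terms and formulas of L_M: variables indexed by nat, parameters from M. *)
Inductive term : Type :=
| tvar : nat -> term
| tpar : M -> term
| tapp : forall f : func L, ('I_(farity f) -> term) -> term.

Inductive formula : Type :=
| feq : term -> term -> formula
| frel : forall r : rel L, ('I_(rarity r) -> term) -> formula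
| fneg : formula -> formula
| fand : formula -> formula -> formula
| fex : nat -> formula -> formula.

Arguments tapp : clear implicits.
Arguments frel : clear implicits.

Definition upd (v : nat -> M) (n : nat) (a : M) : nat -> M :=
  fun m => if m == n then a else v m.

Fixpoint teval (v : nat -> M) (t : term) : M :=
  match t with
  | tvar n => v n
  | tpar a => a
  | tapp f ts => @ifunc L M f (fun i => teval v (ts i))
  end.

Fixpoint sat (v : nat -> M) (phi : formula) : Prop :=
  match phi with
  | feq t1 t2 => teval v t1 = teval v t2
  | frel r ts => @irel L M r (fun i => teval v (ts i))
  | fneg psi => ~ sat v psi
  | fand psi chi => sat v psi /\ sat v chi
  | fex n psi => exists a : M, sat (upd v n a) psi
  end.

Fixpoint tfree (n : nat) (t : term) : Prop :=
  match t with
  | tvar m => m = n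
  | tpar _ => False
  | tapp f ts => exists i, tfree n (ts i)
  end.

Fixpoint ffree (n : nat) (phi : formula) : Prop :=
  match phi with
  | feq t1 t2 => tfree n t1 \/ tfree n t2
  | frel r ts => exists i, tfree n (ts i)
  | fneg psi => ffree n psi
  | fand psi chi => ffree n psi \/ ffree n chi
  | fex m psi => m <> n /\ ffree n psi
  end.

(* parameter-free terms / formulas (i.e. genuine L-formulas) *)
Fixpoint tparfree (t : term) : Prop :=
  match t with
  | tvar _ => True
  | tpar _ => False
  | tapp f ts => forall i, tparfree (ts i)
  end.

Fixpoint fparfree (phi : formula) : Prop :=
  match phi with
  | feq t1 t2 => tparfree t1 /\ tparfree t2
  | frel r ts => forall i, tparfree (ts i)
  | fneg psi => fparfree psi
  | fand psi chi => fparfree psi /\ fparfree chi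
  | fex _ psi => fparfree psi
  end.

Fixpoint tsubst (s : nat -> option M) (t : term) : term :=
  match t with
  | tvar n => match s n with Some a => tpar a | None => tvar n end
  | tpar a => tpar a
  | tapp f ts => tapp f (fun i => tsubst s (ts i))
  end.

Fixpoint fsubst (s : nat -> option M) (phi : formula) : formula :=
  match phi with
  | feq t1 t2 => feq (tsubst s t1) (tsubst s t2)
  | frel r ts => frel r (fun i => tsubst s (ts i))
  | fneg psi => fneg (fsubst s psi)
  | fand psi chi => fand (fsubst s psi) (fsubst s chi)
  | fex n psi => fex n (fsubst (fun m => if m == n then None else s m) psi)
  end.

Definition formula_in (k : nat) (phi : formula) : Prop :=
  forall n, ffree n phi -> n < k.

Definition prefix (k : nat) (v : nat -> M) : 'I_k -> M := fun i => v i.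

Definition blk (k j : nat) (v : nat -> M) : 'I_k -> M := fun i => v (j * k + i).

Arguments prefix : clear implicits.
Arguments blk : clear implicits.

Definition def_rel (P : (nat -> M) -> Prop) : Prop :=
  exists phi : formula, forall v, P v <-> sat v phi.

Definition defset (k : nat) (S : set ('I_k -> M)) : Prop :=
  def_rel (fun v => S (prefix k v)).

Definition definable_group (k : nat) (G : set ('I_k -> M))
  (mul : ('I_k -> M) -> ('I_k -> M) -> ('I_k -> M))
  (one : 'I_k -> M) (inv : ('I_k -> M) -> ('I_k -> M)) : Prop :=
  [/\ defset G,
      def_rel (fun v => [/\ G (blk k 0 v), G (blk k 1 v) &
                            blk k 2 v = mul (blk k 0 v) (blk k 1 v)]),
      G one /\ (forall g h, G g -> G h -> G (mul g h)) /\
        (forall g, G g -> G (inv g)),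
      (forall g h l, G g -> G h -> G l -> mul (mul g h) l = mul g (mul h l)) &
      (forall g, G g -> [/\ mul one g = g, mul g one = g,
                            mul (inv g) g = one & mul g (inv g) = one])].

Definition complete_type (k : nat) (p : set formula) : Prop :=
  [/\ forall phi, p phi -> formula_in k phi,
      (* consistent with the elementary diagram of M = finitely satisfiable in M *)
      forall (n : nat) (f : 'I_n -> formula), (forall i, p (f i)) ->
        exists v : nat -> M, forall i, sat v (f i) &
      forall phi, formula_in k phi -> p phi \/ p (fneg phi)].

Definition in_SG (k : nat) (G : set ('I_k -> M)) (p : set formula) : Prop :=
  complete_type k p /\
  exists phi, p phi /\ forall v, G (prefix k v) <-> sat v phi.

(* phi(x, b): substitute b_j for the variable x_(k+j) *)
Definition inst (k m : nat) (b : 'I_m -> M) : nat -> option M :=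
  fun n => if k <= n then omap b (insub (n - k)) else None.

Definition definable_type (k : nat) (p : set formula) : Prop :=
  forall (m : nat) (phi : formula), fparfree phi -> formula_in (k + m) phi ->
    defset [set b : 'I_m -> M | p (fsubst (inst k b) phi)].

Definition definable_map (k : nat) (G : set ('I_k -> M)) (C : topologicalType)
  (f : ('I_k -> M) -> C) : Prop :=
  forall C1 C2 : set C, closed C1 -> closed C2 -> C1 `&` C2 = set0 ->
    exists Y' : set ('I_k -> M),
      [/\ defset Y', Y' `<=` G,
          (forall g, G g -> C1 (f g) -> Y' g) &
          (forall g, G g -> Y' g -> ~ C2 (f g))].

Definition definable_flow (k : nat) (G : set ('I_k -> M))
  (mul : ('I_k -> M) -> ('I_k -> M) -> ('I_k -> M)) (one : 'I_k -> M)
  (X : topologicalType) (act : ('I_k -> M) -> X -> X) : Prop :=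
  [/\ compact [set: X], hausdorff_space X,
      (forall g, G g -> continuous (act g)),
      (forall x, act one x = x) /\
        (forall g h x, G g -> G h -> act (mul g h) x = act g (act h x)) &
      forall x, definable_map G (fun g => act g x)].

Definition definably_extremely_amenable (k : nat) (G : set ('I_k -> M))
  (mul : ('I_k -> M) -> ('I_k -> M) -> ('I_k -> M)) (one : 'I_k -> M) : Prop :=
  forall (X : topologicalType) (act : ('I_k -> M) -> X -> X),
    (exists x : X, True) -> definable_flow G mul one act ->
    exists x : X, forall g, G g -> act g x = x.

Definition left_generic (k : nat) (G : set ('I_k -> M))
  (mul : ('I_k -> M) -> ('I_k -> M) -> ('I_k -> M)) (Y : set ('I_k -> M)) : Prop :=
  exists (n : nat) (gs : 'I_n -> ('I_k -> M)),
    (forall i, G (gs i)) /\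
    forall g, G g -> exists i y, Y y /\ g = mul (gs i) y.

End Syntax.

(* Main.v *)
From HB Require Import structures.
Require Import Defs.
From mathcomp Require Import all_boot.
From mathcomp Require Import boolp classical_sets topology.
From mathcomp Require Import finmap zify.

Set Implicit Arguments.
Unset Strict Implicit.
Unset Printing Implicit Defensive.
Local Open Scope classical_set_scope.

Section Syn.
Variables (L : language) (M : structure L).
Local Notation term := (term M).
Local Notation formula := (formula M).

Fixpoint tbound (t : term) : nat :=
  match t with
  | tvar n => n.+1
  | tpar _ => 0
  | tapp f ts => \max_(i < farity f) tbound (ts i)
  end.

Fixpoint fbound (phi : formula) : nat :=
  match phi with
  | feq t1 t2 => maxn (tbound t1) (tbound t2)
  | Defs.frel r ts => \max_(i < rarity r) tbound (ts i)
  | fneg psi => fbound psi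
  | fand psi chi => maxn (fbound psi) (fbound chi)
  | fex n psi => maxn n.+1 (fbound psi)
  end.

Lemma teval_ext (t : term) (v w : nat -> M) :
  (forall n, n < tbound t -> v n = w n) -> teval v t = teval w t.
Proof.
elim: t => [n|a|f ts IH] /= H; first by apply: H.
  by [].
congr ifunc; apply: funext => i; apply: IH => n Hn; apply: H.
by apply: leq_trans Hn _; apply: (leq_bigmax i).
Qed.

Lemma sat_ext (phi : formula) (v w : nat -> M) :
  (forall n, n < fbound phi -> v n = w n) -> (sat v phi <-> sat w phi).
Proof.
elim: phi v w => [t1 t2|r ts|psi IH|psi IH chi IH'|n psi IH] v w /= H.
- rewrite (teval_ext (w := w) (t := t1)) ?(teval_ext (w := w) (t := t2)) //.
    by move=> m Hm; apply: H; rewrite leq_max Hm orbT.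
  by move=> m Hm; apply: H; rewrite leq_max Hm.
- suff -> : (fun i => teval v (ts i)) = (fun i => teval w (ts i)) by [].
  apply: funext => i; apply: teval_ext => m Hm; apply: H.
  by apply: leq_trans Hm _; apply: (leq_bigmax i).
- by rewrite (IH v w).
- rewrite (IH v w) ?(IH' v w) //.
    by move=> m Hm; apply: H; rewrite leq_max Hm orbT.
  by move=> m Hm; apply: H; rewrite leq_max Hm.
- have key a : sat (upd v n a) psi <-> sat (upd w n a) psi.
    apply: IH => m Hm; rewrite /upd; case: eqP => // _.
    by apply: H; rewrite leq_max Hm orbT.
  by split=> -[a Ha]; exists a; apply/key.
Qed.

Lemma sat_eqf (phi : formula) (v w : nat -> M) :
  (forall n, n < fbound phi -> v n = w n) -> sat v phi -> sat w phi.
Proof. by move=> H; have [] := sat_ext H. Qed.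

Lemma tfree_bound n (t : term) : tfree n t -> n < tbound t.
Proof.
elim: t => [m|a|f ts IH] /=; first by move=> ->.
  by [].
move=> [i /IH Hi]; apply: leq_trans Hi _; exact: (leq_bigmax i).
Qed.

Lemma ffree_bound n (phi : formula) : ffree n phi -> n < fbound phi.
Proof.
elim: phi => [t1 t2|r ts|psi IH|psi IH chi IH'|m psi IH] /=.
- by move=> [/tfree_bound H|/tfree_bound H]; rewrite leq_max H ?orbT.
- move=> [i /tfree_bound Hi]; apply: leq_trans Hi _; exact: (leq_bigmax i).
- exact: IH.
- by move=> [/IH H|/IH' H]; rewrite leq_max H ?orbT.
- by move=> [_ /IH H]; rewrite leq_max H orbT.
Qed.

Fixpoint tshift (S : nat) (t : term) : term :=
  match t with
  | tvar n => tvar M (n + S)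
  | tpar a => tpar a
  | tapp f ts => tapp (fun i => tshift S (ts i))
  end.

Fixpoint fshift (S : nat) (phi : formula) : formula :=
  match phi with
  | feq t1 t2 => feq (tshift S t1) (tshift S t2)
  | Defs.frel r ts => @Defs.frel _ _ r (fun i => tshift S (ts i))
  | fneg psi => fneg (fshift S psi)
  | fand psi chi => fand (fshift S psi) (fshift S chi)
  | fex n psi => fex (n + S) (fshift S psi)
  end.

Lemma teval_shift S v (t : term) : teval v (tshift S t) = teval (fun j => v (j + S)) t.
Proof.
elim: t => [n|a|f ts IH] //=; congr ifunc; apply: funext => i; exact: IH.
Qed.

Lemma sat_shift S (phi : formula) v :
  sat v (fshift S phi) <-> sat (fun j => v (j + S)) phi.
Proof.
elim: phi v => [t1 t2|r ts|psi IH|psi IH chi IH'|n psi IH] v /=.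
- by rewrite !teval_shift.
- suff -> : (fun i => teval v (tshift S (ts i))) =
            (fun i => teval (fun j => v (j + S)) (ts i)) by [].
  by apply: funext => i; rewrite teval_shift.
- by rewrite IH.
- by rewrite IH IH'.
- split=> -[a Ha]; exists a; move: Ha; rewrite IH;
  suff -> : (fun j => upd v (n + S) a (j + S)) = upd (fun j => v (j + S)) n a by [].
  all: by apply: funext => j; rewrite /upd eqn_add2r.
Qed.

Lemma tfree_shift S n (t : term) : tfree n (tshift S t) -> S <= n /\ tfree (n - S) t.
Proof.
elim: t => [m|a|f ts IH] //=.
  by move=> <-; rewrite leq_addl addnK.
by move=> [i /IH [H1 H2]]; split => //; exists i.
Qed.

Lemma ffree_shift S n (phi : formula) : ffree n (fshift S phi) -> S <= n /\ ffree (n - S) phi.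
Proof.
elim: phi => [t1 t2|r ts|psi IH|psi IH chi IH'|m psi IH] /=.
- by move=> [/tfree_shift [? ?]|/tfree_shift [? ?]]; split => //; [left|right].
- by move=> [i /tfree_shift [? ?]]; split => //; exists i.
- exact: IH.
- by move=> [/IH [? ?]|/IH' [? ?]]; split => //; [left|right].
- move=> [ne /IH [H1 H2]]; split => //; split => //.
  by move=> E; apply: ne; rewrite E subnK.
Qed.

Lemma tparfree_shift S (t : term) : tparfree t -> tparfree (tshift S t).
Proof. by elim: t => [n|a|f ts IH] //= H i; apply: IH. Qed.

Lemma fparfree_shift S (phi : formula) : fparfree phi -> fparfree (fshift S phi).
Proof.
elim: phi => [t1 t2|r ts|psi IH|psi IH chi IH'|m psi IH] //=.
- by move=> [? ?]; split; apply: tparfree_shift.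
- by move=> H i; apply: tparfree_shift.
- by move=> [? ?]; split; auto.
Qed.

Ltac ifcrush := repeat match goal with |- context [if ?b then _ else _] => case: (boolP b) => ? end;
  try reflexivity; try lia.

Fixpoint fexR (S N : nat) (phi : formula) : formula :=
  match N with 0 => phi | N'.+1 => fex S (fexR S.+1 N' phi) end.

Lemma sat_fexR N S (phi : formula) v :
  sat v (fexR S N phi) <->
  exists f : nat -> M, sat (fun j => if (S <= j) && (j < S + N) then f j else v j) phi.
Proof.
elim: N S v => [|N IH] S v /=.
  have E f : (fun j => if (S <= j) && (j < S + 0) then f j else v j) = v.
    by apply: funext => j; rewrite addn0; case: ifP => //; lia.
  by split => [H|[f]]; [exists v|]; rewrite E.
split.
  move=> [a /IH [f Hf]]; exists (fun j => if j == S then a else f j); move: Hf.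
  apply: sat_eqf => n _; rewrite /upd.
  by ifcrush.
move=> [f Hf]; exists (f S); apply/IH; exists f; move: Hf.
apply: sat_eqf => n _; rewrite /upd.
by ifcrush; match goal with H : is_true (_ == _) |- _ => move/eqP: H => -> end.
Qed.

Lemma ffree_fexR N S n (phi : formula) : ffree n (fexR S N phi) ->
  ffree n phi /\ ~~ ((S <= n) && (n < S + N)).
Proof.
elim: N S => [|N IH] S /=; first by move=> H; split => //; lia.
move=> [ne /IH [H1 H2]]; split => //; lia.
Qed.

Lemma fparfree_fexR N S (phi : formula) : fparfree phi -> fparfree (fexR S N phi).
Proof. by elim: N S => //= N IH S /IH. Qed.

Definition ftrue : formula := fex 0 (feq (tvar M 0) (tvar M 0)).

Lemma sat_ftrue v : sat v ftrue.
Proof. by exists (v 0). Qed.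

Fixpoint feqs (S N : nat) (tau : nat -> term) : formula :=
  match N with 0 => ftrue | N'.+1 => fand (feqs S N' tau) (feq (tvar M (S + N')) (tau N')) end.

Lemma sat_feqs S N tau v : sat v (feqs S N tau) <-> forall i, i < N -> v (S + i) = teval v (tau i).
Proof.
elim: N => [|N IH] /=; first by split => // _; exact: sat_ftrue.
split.
  move=> [/IH H1 H2] i; rewrite ltnS leq_eqVlt => /orP [/eqP ->|/H1] //.
move=> H; split; [apply/IH => i Hi; apply: H; lia | apply: H; lia].
Qed.

Lemma ffree_feqs S N tau n : ffree n (feqs S N tau) ->
  exists2 i, i < N & n = S + i \/ tfree n (tau i).
Proof.
elim: N => [|N IH] /=; first by move=> [ne [H|H]]; exfalso; exact: ne H.
move=> [/IH [i Hi H]|[H|H]]; first by exists i => //; lia.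
- by exists N => //; left.
- by exists N => //; right.
Qed.

Definition tsig (x : nat + M) : term :=
  match x with inl n => tvar M n | inr a => tpar a end.
Definition ev (v : nat -> M) (x : nat + M) : M :=
  match x with inl n => v n | inr a => a end.

Definition sbound (sig : nat -> nat + M) (N : nat) : nat :=
  \max_(i < N) (match sig i with inl n => n.+1 | inr _ => 0 end).

Definition fcomp (sig : nat -> nat + M) (phi : formula) : formula :=
  let N := fbound phi in let S := sbound sig N in
  fexR S N (fand (feqs S N (fun i => tsig (sig i))) (fshift S phi)).

Lemma sbound_lt sig N i n : i < N -> sig i = inl n -> n < sbound sig N.
Proof.
move=> iN e; rewrite /sbound.
have := @leq_bigmax _ (fun i : 'I_N => match sig i with inl n => n.+1 | inr _ => 0 end) (Ordinal iN).
by rewrite /= e.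
Qed.

Lemma sat_fcomp sig (phi : formula) v :
  sat v (fcomp sig phi) <-> sat (fun j => ev v (sig j)) phi.
Proof.
rewrite /fcomp; set N := fbound phi; set S := sbound sig N.
have evw f j : j < N -> ev (fun j => if (S <= j) && (j < S + N) then f j else v j) (sig j)
  = ev v (sig j).
  move=> jN; case E : (sig j) => [n|a] //=.
  by have := sbound_lt jN E; rewrite -/S; case: ifP => //; lia.
rewrite sat_fexR; split.
  move=> [f /= [/sat_feqs H1 /sat_shift H2]]; move: H2.
  apply: sat_eqf => j jN /=; rewrite ifT; last by lia.
  move: (H1 j jN); rewrite ifT; last by lia.
  by rewrite addnC => ->; rewrite -(evw f j jN); case: (sig j).
move=> H; exists (fun j => ev v (sig (j - S))); split.
  apply/sat_feqs => i iN; rewrite ifT; last by lia.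
  rewrite addKn; case E: (sig i) => [n|a] //=.
  by have := sbound_lt iN E; rewrite -/S; case: ifP => //; lia.
apply/sat_shift; move: H; apply: sat_eqf => j jN.
by rewrite ifT ?addnK //; lia.
Qed.

Lemma ffree_fcomp sig (phi : formula) n : ffree n (fcomp sig phi) ->
  exists2 i, i < fbound phi & sig i = inl n.
Proof.
rewrite /fcomp; set N := fbound phi; set S := sbound sig N.
move=> /ffree_fexR [+ H3].
move=> [/ffree_feqs [i iN [E|E]]|/ffree_shift [H1 /ffree_bound H2]].
- by move: H3; rewrite E; lia.
- by move: E; case E' : (sig i) => [m|a] //= <-; exists i.
- by move: H3; rewrite -/N in H2; lia.
Qed.

Lemma fparfree_feqs S N tau : (forall i, i < N -> tparfree (tau i)) ->
  fparfree (feqs S N tau).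
Proof.
elim: N => [|N IH] H /=; first by [].
split; first by apply: IH => i Hi; apply: H; lia.
by split => //; apply: H.
Qed.

Lemma fparfree_fcomp sig (phi : formula) :
  (forall i, i < fbound phi -> exists n, sig i = inl n) -> fparfree phi ->
  fparfree (fcomp sig phi).
Proof.
move=> Hs Hp; rewrite /fcomp; apply: fparfree_fexR; split; last exact: fparfree_shift.
by apply: fparfree_feqs => i /Hs [n ->].
Qed.


Lemma teval_tsubst s v (t : term) :
  teval v (tsubst s t) = teval (fun n => odflt (v n) (s n)) t.
Proof.
elim: t => [n|a|f ts IH] //=; first by case: (s n).
by congr ifunc; apply: funext => i; exact: IH.
Qed.

Lemma sat_fsubst s (phi : formula) v :
  sat v (fsubst s phi) <-> sat (fun n => odflt (v n) (s n)) phi.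
Proof.
elim: phi s v => [t1 t2|r ts|psi IH|psi IH chi IH'|n psi IH] s v /=.
- by rewrite !teval_tsubst.
- suff -> : (fun i => teval v (tsubst s (ts i))) =
            (fun i => teval (fun n => odflt (v n) (s n)) (ts i)) by [].
  by apply: funext => i; rewrite teval_tsubst.
- by rewrite IH.
- by rewrite IH IH'.
- have key a : (fun m => odflt (upd v n a m) (if m == n then None else s m)) =
               upd (fun n => odflt (v n) (s n)) n a.
    by apply: funext => m; rewrite /upd; case: eqP.
  by split=> -[a Ha]; exists a; move: Ha; rewrite IH key.
Qed.

Lemma tfree_tsubst s n (t : term) : tfree n (tsubst s t) -> tfree n t /\ s n = None.
Proof.
elim: t => [m|a|f ts IH] //=.
  by case E : (s m) => [a|] //= <-.
by move=> [i /IH [H1 H2]]; split => //; exists i.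
Qed.

Lemma ffree_fsubst s n (phi : formula) : ffree n (fsubst s phi) -> ffree n phi /\ s n = None.
Proof.
elim: phi s => [t1 t2|r ts|psi IH|psi IH chi IH'|m psi IH] s /=.
- by move=> [/tfree_tsubst [? ?]|/tfree_tsubst [? ?]]; split => //; [left|right].
- by move=> [i /tfree_tsubst [? ?]]; split => //; exists i.
- exact: IH.
- by move=> [/IH [? ?]|/IH' [? ?]]; split => //; [left|right].
- move=> [ne /IH [H1]]; case: eqP => [/esym //|_ H2]; by split.
Qed.

Fixpoint tpars (t : term) : seq {classic M} :=
  match t with
  | tvar _ => [::]
  | tpar a => [:: (a : {classic M})]
  | tapp f ts => flatten [seq tpars (ts i) | i <- enum 'I_(farity f)]
  end.

Fixpoint fpars (phi : formula) : seq {classic M} :=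
  match phi with
  | feq t1 t2 => tpars t1 ++ tpars t2
  | Defs.frel r ts => flatten [seq tpars (ts i) | i <- enum 'I_(rarity r)]
  | fneg psi => fpars psi
  | fand psi chi => fpars psi ++ fpars chi
  | fex _ psi => fpars psi
  end.

Fixpoint tabs (S : nat) (s : seq {classic M}) (t : term) : term :=
  match t with
  | tvar n => tvar M n
  | tpar a => tvar M (S + index (a : {classic M}) s)
  | tapp f ts => tapp (fun i => tabs S s (ts i))
  end.

Fixpoint fabs (S : nat) (s : seq {classic M}) (phi : formula) : formula :=
  match phi with
  | feq t1 t2 => feq (tabs S s t1) (tabs S s t2)
  | Defs.frel r ts => @Defs.frel _ _ r (fun i => tabs S s (ts i))
  | fneg psi => fneg (fabs S s psi)
  | fand psi chi => fand (fabs S s psi) (fabs S s chi)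
  | fex n psi => fex n (fabs S s psi)
  end.

Lemma tpars_sub n (ts : 'I_n -> term) i :
  {subset tpars (ts i) <= flatten [seq tpars (ts i) | i <- enum 'I_n]}.
Proof. by move=> a ai; apply/flatten_mapP; exists i => //; rewrite mem_enum. Qed.

Lemma teval_tabs S s (t : term) v w : tbound t <= S -> {subset tpars t <= s} ->
  (forall n, n < S -> w n = v n) -> (forall a, a \in s -> w (S + index a s) = a) ->
  teval w (tabs S s t) = teval v t.
Proof.
elim: t => [n|a|f ts IH] /= Hb Hs H1 H2.
- by apply: H1.
- by apply: H2; apply: Hs; rewrite mem_seq1.
- congr ifunc; apply: funext => i; apply: IH => //.
    by apply: leq_trans Hb; apply: (leq_bigmax i).
  by move=> a /tpars_sub /Hs.
Qed.

Lemma sat_fabs S s (phi : formula) v w : fbound phi <= S -> {subset fpars phi <= s} ->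
  (forall n, n < S -> w n = v n) -> (forall a, a \in s -> w (S + index a s) = a) ->
  (sat w (fabs S s phi) <-> sat v phi).
Proof.
elim: phi v w => [t1 t2|r ts|psi IH|psi IH chi IH'|n psi IH] v w /= Hb Hs H1 H2.
- rewrite !(teval_tabs (v := v)) //.
  + by apply: leq_trans Hb; rewrite leq_maxr.
  + by move=> a ai; apply: Hs; rewrite mem_cat ai orbT.
  + by apply: leq_trans Hb; rewrite leq_maxl.
  + by move=> a ai; apply: Hs; rewrite mem_cat ai.
- suff -> : (fun i => teval w (tabs S s (ts i))) = (fun i => teval v (ts i)) by [].
  apply: funext => i; apply: teval_tabs => //.
    by apply: leq_trans Hb; apply: (leq_bigmax i).
  by move=> a /tpars_sub /Hs.
- by rewrite (IH v w).
- rewrite (IH v w) ?(IH' v w) //.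
  + by apply: leq_trans Hb; rewrite leq_maxr.
  + by move=> a ai; apply: Hs; rewrite mem_cat ai orbT.
  + by apply: leq_trans Hb; rewrite leq_maxl.
  + by move=> a ai; apply: Hs; rewrite mem_cat ai.
- have key a : sat (upd w n a) (fabs S s psi) <-> sat (upd v n a) psi.
    apply: IH => //.
    + by apply: leq_trans Hb; rewrite leq_maxr.
    + by move=> m Hm; rewrite /upd; case: eqP => // _; apply: H1.
    + move=> b bs; rewrite /upd; case: eqP => [E|_]; last exact: H2.
      by move: Hb; rewrite -E geq_max; lia.
  by split=> -[a Ha]; exists a; apply/key.
Qed.

Lemma tfree_tabs S s (t : term) n : tbound t <= S ->
  {subset tpars t <= s} -> tfree n (tabs S s t) -> n < S + size s.
Proof.
elim: t => [m|a|f ts IH] /= Hb Hs.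
- by move=> E; rewrite -E; lia.
- move=> <-; rewrite ltn_add2l index_mem; apply: Hs; by rewrite mem_seq1.
- move=> [i]; apply: IH.
    by apply: leq_trans Hb; apply: (leq_bigmax i).
  by move=> a /tpars_sub /Hs.
Qed.

Lemma ffree_fabs S s (phi : formula) n : fbound phi <= S ->
  {subset fpars phi <= s} -> ffree n (fabs S s phi) -> n < S + size s.
Proof.
elim: phi => [t1 t2|r ts|psi IH|psi IH chi IH'|m psi IH] /= Hb Hs.
- move=> [H|H]; apply: tfree_tabs H.
  + by apply: leq_trans Hb; rewrite leq_maxl.
  + by move=> a ai; apply: Hs; rewrite mem_cat ai.
  + by apply: leq_trans Hb; rewrite leq_maxr.
  + by move=> a ai; apply: Hs; rewrite mem_cat ai orbT.
- move=> [i]; apply: tfree_tabs.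
    by apply: leq_trans Hb; apply: (leq_bigmax i).
  by move=> a /tpars_sub /Hs.
- exact: IH.
- move=> [H|H]; [apply: IH H|apply: IH' H].
  + by apply: leq_trans Hb; rewrite leq_maxl.
  + by move=> a ai; apply: Hs; rewrite mem_cat ai.
  + by apply: leq_trans Hb; rewrite leq_maxr.
  + by move=> a ai; apply: Hs; rewrite mem_cat ai orbT.
- move=> [_]; apply: IH => //.
  by apply: leq_trans Hb; rewrite leq_maxr.
Qed.

Lemma tparfree_tabs S s (t : term) : tparfree (tabs S s t).
Proof. by elim: t => //= f ts IH i. Qed.

Lemma fparfree_fabs S s (phi : formula) : fparfree (fabs S s phi).
Proof.
elim: phi => /=.
- by move=> t1 t2; split; apply: tparfree_tabs.
- by move=> r ts i; apply: tparfree_tabs.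
- by [].
- by move=> psi IH chi IH'; split.
- by [].
Qed.

Lemma def_ext (P Q : (nat -> M) -> Prop) : (forall v, P v <-> Q v) ->
  def_rel P -> def_rel Q.
Proof. by move=> H [phi Hp]; exists phi => v; rewrite -H. Qed.

Lemma def_and P Q : def_rel P -> def_rel Q -> def_rel (fun v : nat -> M => P v /\ Q v).
Proof. by move=> [phi Hp] [psi Hq]; exists (fand phi psi) => v /=; rewrite Hp Hq. Qed.

Lemma def_not P : def_rel P -> def_rel (fun v : nat -> M => ~ P v).
Proof. by move=> [phi Hp]; exists (fneg phi) => v /=; rewrite Hp. Qed.

Lemma def_or P Q : def_rel P -> def_rel Q -> def_rel (fun v : nat -> M => P v \/ Q v).
Proof.
move=> dP dQ; apply: def_ext (def_not (def_and (def_not dP) (def_not dQ))) => v.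
split; last by move=> [H|H] [H1 H2].
by move=> H; apply: contrapT => /not_orP.
Qed.

Lemma def_true : def_rel (fun _ : nat -> M => True).
Proof. by exists ftrue => v; split => // _; apply: sat_ftrue. Qed.

Lemma def_false : def_rel (fun _ : nat -> M => False).
Proof. by exists (fneg ftrue) => v; split => //= /(_ (sat_ftrue v)). Qed.

Lemma def_comp sig P : def_rel P -> def_rel (fun v : nat -> M => P (fun j => ev v (sig j))).
Proof. by move=> [phi Hp]; exists (fcomp sig phi) => v; rewrite sat_fcomp Hp. Qed.

Lemma def_exR S N P : def_rel P -> def_rel (fun v : nat -> M =>
  exists f : nat -> M, P (fun j => if (S <= j) && (j < S + N) then f j else v j)).
Proof.
move=> [phi Hp]; exists (fexR S N phi) => v; rewrite sat_fexR.
by split => -[f Hf]; exists f; apply/Hp.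
Qed.

Lemma def_all A (l : seq A) (P : A -> (nat -> M) -> Prop) :
  (forall a, def_rel (P a)) -> def_rel (fun v => forall a, List.In a l -> P a v).
Proof.
move=> dP; elim: l => [|a l IH] /=.
  by apply: def_ext def_true => v; split.
apply: def_ext (def_and (dP a) IH) => v; split.
  by move=> [H1 H2] b [<-|/H2].
by move=> H; split; [apply: H; left|move=> b bl; apply: H; right].
Qed.

Lemma def_exl A (l : seq A) (P : A -> (nat -> M) -> Prop) :
  (forall a, def_rel (P a)) -> def_rel (fun v => exists2 a, List.In a l & P a v).
Proof.
move=> dP; elim: l => [|a l IH] /=.
  by apply: def_ext def_false => v; split => // -[].
apply: def_ext (def_or (dP a) IH) => v; split.
  by move=> [H|[b bl Hb]]; [exists a => //; left|exists b => //; right].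
by move=> [b [<-|bl] Hb]; [left|right; exists b].
Qed.

Lemma def_abs (m0 : M) P T0 : def_rel P -> exists S, T0 <= S /\
  exists (psi : formula) (m' : nat) (c : nat -> M),
   [/\ fparfree psi, (forall n, ffree n psi -> n < S + m') &
       forall v, P v <-> sat (fun j => if j < S then v j else c (j - S)) psi].
Proof.
move=> [phi Hp]; exists (maxn T0 (fbound phi)); split; first exact: leq_maxl.
set S := maxn T0 (fbound phi).
exists (fabs S (fpars phi) phi), (size (fpars phi)), (fun j => nth m0 (fpars phi) j).
split; first exact: fparfree_fabs.
  by move=> n; apply: ffree_fabs; [exact: leq_maxr|].
move=> v; rewrite Hp; symmetry; apply: sat_fabs => //; first exact: leq_maxr.
  by move=> n ->.
move=> a ai; have -> : (S + index a (fpars phi) < S) = false by lia.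
by rewrite addKn; apply: (@nth_index _ (m0 : {classic M})).
Qed.

Lemma teval_ext_free (t : term) (v w : nat -> M) :
  (forall n, tfree n t -> v n = w n) -> teval v t = teval w t.
Proof.
elim: t => [n|a|f ts IH] /= H; first by apply: H.
  by [].
by congr ifunc; apply: funext => i; apply: IH => n Hn; apply: H; exists i.
Qed.

Lemma sat_ext_free (phi : formula) (v w : nat -> M) :
  (forall n, ffree n phi -> v n = w n) -> (sat v phi <-> sat w phi).
Proof.
elim: phi v w => [t1 t2|r ts|psi IH|psi IH chi IH'|n psi IH] v w /= H.
- rewrite (teval_ext_free (w := w) (t := t1)) ?(teval_ext_free (w := w) (t := t2)) //.
    by move=> m Hm; apply: H; right.
  by move=> m Hm; apply: H; left.
- suff -> : (fun i => teval v (ts i)) = (fun i => teval w (ts i)) by [].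
  by apply: funext => i; apply: teval_ext_free => m Hm; apply: H; exists i.
- by rewrite (IH v w).
- rewrite (IH v w) ?(IH' v w) //.
    by move=> m Hm; apply: H; right.
  by move=> m Hm; apply: H; left.
- have key a : sat (upd v n a) psi <-> sat (upd w n a) psi.
    apply: IH => m Hm; rewrite /upd; case: eqP => // ne.
    by apply: H; split => // E; apply: ne.
  by split=> -[a Ha]; exists a; apply/key.
Qed.

End Syn.

Lemma In_mem (T : eqType) (x : T) (s : seq T) : List.In x s <-> x \in s.
Proof.
elim: s => [|y s IH] //=; rewrite in_cons; split.
  by move=> [->|/IH ->]; rewrite ?eqxx ?orbT.
by move=> /orP [/eqP ->|/IH]; [left|right].
Qed.


Definition pX (X : topologicalType) (x0 : X) : Type := X.
HB.instance Definition _ (X : topologicalType) (x0 : X) := Topological.copy (@pX X x0) X.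
HB.instance Definition _ (X : topologicalType) (x0 : X) := isPointed.Build (@pX X x0) x0.

Lemma compact_cover' (X : topologicalType) (x0 : X) (A : set X) :
  compact A -> cover_compact A.
Proof.
move=> cA; have : @compact (@pX X x0) A by [].
by rewrite compact_cover.
Qed.

Definition cylT (T : Type) (P : (T -> bool) -> Prop) : Type := {z : T -> bool | P z}.
HB.instance Definition _ (T : Type) (P : (T -> bool) -> Prop) := gen_eqMixin (cylT P).
HB.instance Definition _ (T : Type) (P : (T -> bool) -> Prop) := gen_choiceMixin (cylT P).

Section CylDef.
Variables (T : Type) (P : (T -> bool) -> Prop).
Definition cval (z : cylT P) : T -> bool := proj1_sig z.
Definition cyl (z : cylT P) (s : seq T) : set (cylT P) :=
  [set w | forall h, List.In h s -> cval w h = cval z h].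
Definition cnbhs (z : cylT P) : set_system (cylT P) := [set A | exists s, cyl z s `<=` A].

Lemma cnbhs_filter z : ProperFilter (cnbhs z).
Proof.
apply: Build_ProperFilter; first by move=> [s /(_ z (fun _ _ => erefl))].
split.
- by exists [::].
- move=> A B [s sA] [t tB]; exists (s ++ t) => w Hw; split.
    by apply: sA => h hs; apply: Hw; apply: List.in_or_app; left.
  by apply: tB => h hs; apply: Hw; apply: List.in_or_app; right.
- by move=> A B AB [s sA]; exists s; apply: subset_trans AB.
Qed.

Lemma cnbhs_singleton z A : cnbhs z A -> A z.
Proof. by move=> [s sA]; apply: sA. Qed.

Lemma cnbhs_nbhs z A : cnbhs z A -> cnbhs z (cnbhs^~ A).
Proof.
move=> [s sA]; exists s => w Hw; exists s => u Hu; apply: sA => h hs.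
by rewrite Hu // Hw.
Qed.
End CylDef.

HB.instance Definition _ (T : Type) (P : (T -> bool) -> Prop) :=
  hasNbhs.Build (cylT P) (@cnbhs T P).
HB.instance Definition _ (T : Type) (P : (T -> bool) -> Prop) :=
  Nbhs_isNbhsTopological.Build (cylT P) (@cnbhs_filter T P) (@cnbhs_singleton T P)
    (@cnbhs_nbhs T P).

Section CylTheory.
Variables (T : Type) (P : (T -> bool) -> Prop).
Local Notation X := (cylT P).

Lemma cval_inj (z w : X) : cval z = cval w -> z = w.
Proof.
case: z w => [z pz] [w pw] /= E; move: pz pw; rewrite E => pz pw.
by rewrite (Prop_irrelevance pz pw).
Qed.

Lemma nbhsX (z : X) A : nbhs z A <-> exists s, cyl z s `<=` A.
Proof. by []. Qed.

Lemma cyl_open (z : X) s : open (cyl z s).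
Proof.
rewrite openE => w Hw; exists s => u Hu h hs.
by rewrite Hu // Hw.
Qed.

Lemma cyl_center (z : X) s : cyl z s z.
Proof. by []. Qed.

Lemma cyl_hausdorff : hausdorff_space X.
Proof.
move=> p q clpq; apply: cval_inj; apply: funext => h; apply: contrapT => ne.
have [w [Hp Hq]] := clpq (cyl p [:: h]) (cyl q [:: h]) (ex_intro _ [:: h] (fun _ x => x))
    (ex_intro _ [:: h] (fun _ x => x)).
by apply: ne; rewrite -(Hp h) ?(Hq h) //; left.
Qed.

Lemma cyl_compact :
  (forall z0 : T -> bool, (forall s, exists w : X, forall h, List.In h s -> cval w h = z0 h) -> P z0) ->
  compact [set: X].
Proof.
move=> Pcl F PF _.
have [U [UU FU]] := ultraFilterLemma PF.
have PU : ProperFilter U by apply: ultra_proper.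
pose z0 h := asbool (U [set w : X | cval w h]).
have Eh h : U [set w : X | cval w h = z0 h].
  rewrite /z0; case: asboolP => Hh.
    by apply: filterS Hh.
  have [//|H] := in_ultra_setVsetC [set w : X | cval w h] UU.
  by apply: filterS H => w /negP /negbTE.
have Es s : U [set w : X | forall h, List.In h s -> cval w h = z0 h].
  elim: s => [|h s IH].
    have -> : [set w : X | forall h, List.In h [::] -> cval w h = z0 h] = setT.
      by apply/seteqP; split => // w _ h [].
    exact: filterT.
  apply: filterS (filterI (Eh h) IH) => w [H1 H2] h' /= [<-|hs] //.
  exact: H2.
have Pz0 : P z0.
  apply: Pcl => s; have := Es s.
  move=> Us; apply: contrapT => ne; apply: (@filter_not_empty _ U _).
  suff <- : [set w : X | forall h, List.In h s -> cval w h = z0 h] = set0 by [].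
  by apply/seteqP; split => // w Hw; apply: ne; exists w.
exists (exist _ z0 Pz0); split => // A B FA [s sB].
have : U (A `&` [set w : X | forall h, List.In h s -> cval w h = z0 h]).
  by apply: filterI => //; apply: FU.
move=> UAs; apply: contrapT => ne; apply: (@filter_not_empty _ U _).
suff <- : A `&` [set w : X | forall h, List.In h s -> cval w h = z0 h] = set0 by [].
apply/seteqP; split => // w [Aw Hw]; apply: ne; exists w; split => //.
by apply: sB.
Qed.

Lemma cyl_continuous (F : X -> X) (r : T -> T) :
  (forall z h, cval (F z) h = cval z (r h)) -> continuous F.
Proof.
move=> HF z B /= [s sB]; exists (map r s) => w Hw; apply: sB => h hs.
by rewrite !HF; apply: Hw; apply: List.in_map.
Qed.

Lemma cyl_separate (C1 C2 : set X) : compact [set: X] -> closed C1 -> closed C2 ->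
  C1 `&` C2 = set0 ->
  exists l : seq (X * seq T), (forall z, C1 z -> exists2 p, List.In p l & cyl p.1 p.2 z) /\
    (forall p, List.In p l -> forall z, cyl p.1 p.2 z -> ~ C2 z).
Proof.
move=> cpt cl1 cl2 dis.
have [[x0 _]|C10] := pselect (exists z, C1 z); last first.
  exists [::]; split => // z C1z; exfalso; apply: C10; by exists z.
have : forall z, exists s, C1 z -> cyl z s `<=` ~` C2.
  move=> z; have [C1z|nC1z] := pselect (C1 z); last by exists [::].
  have : nbhs z (~` C2).
    move: cl2; rewrite -openC openE => /(_ z) H; apply: H => C2z.
    have : (C1 `&` C2) z by split.
    by rewrite dis.
  by move=> [s sC]; exists s.
move=> /choice [sf Hsf].
have cC1 : compact C1 := subclosed_compact cl1 cpt (fun _ _ => I).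
have [D' sD' cov] : finite_subset_cover (C1 : set {classic X})
    (fun z : {classic X} => cyl z (sf z)) C1.
  apply: (compact_cover' x0 cC1).
  - by move=> z _; apply: cyl_open.
  - by move=> z C1z; exists z.
exists [seq (z : X, sf z) | z <- enum_fset D']; split.
  move=> z /cov [w wD' Hw]; exists (w : X, sf w) => //.
  apply: List.in_map; apply/(In_mem (w : {classic X})); exact: wD'.
move=> p /List.in_map_iff [w [<- wD']] z /= Hz.
have C1w : C1 w by apply/set_mem/sD'; apply/(In_mem (w : {classic X})).
exact: (Hsf w C1w z Hz).
Qed.
End CylTheory.

Section Fwd.
Variables (L : language) (M : structure L) (k : nat).
Variables (G : set ('I_k -> M)) (mul : ('I_k -> M) -> ('I_k -> M) -> ('I_k -> M))
  (one : 'I_k -> M) (inv : ('I_k -> M) -> ('I_k -> M)).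
Hypothesis DG : definable_group G mul one inv.
Hypothesis kpos : 0 < k.
Local Notation pre := (@Defs.prefix _ _ k).
Local Notation bk := (@blk _ _ k).

Let G1 : G one. Proof. by case: DG => _ _ [] //. Qed.
Let GM g h : G g -> G h -> G (mul g h). Proof. by case: DG => _ _ [_ []] ? ?; auto. Qed.
Let dG : defset G. Proof. by case: DG. Qed.
Let dGr : def_rel (fun v : nat -> M => [/\ G (bk 0 v), G (bk 1 v) &
                            bk 2 v = mul (bk 0 v) (bk 1 v)]).
Proof. by case: DG. Qed.

Definition m0 : M := one (Ordinal kpos).
Definition ordof (j : nat) : 'I_k := insubd (Ordinal kpos) j.
Definition ext (u : 'I_k -> M) : nat -> M := fun j => if j < k then u (ordof j) else m0.

Lemma ordofK (i : 'I_k) : ordof i = i.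
Proof. by apply: val_inj; rewrite /ordof val_insubd ltn_ord. Qed.

Lemma pre_ext u : pre (ext u) = u.
Proof. by apply: funext => i; have ik := ltn_ord i; rewrite /Defs.prefix /ext ltn_ord ordofK. Qed.

Lemma L_mul (D : set ('I_k -> M)) : defset D ->
  def_rel (fun v : nat -> M => [/\ G (bk 1 v), G (pre v) & D (mul (bk 1 v) (pre v))]).
Proof.
move=> dD.
pose s1 := fun j => (inl (if j < k then k + j else if j < 2 * k then j - k else j) : nat + M).
pose s2 := fun j => (inl (2 * k + j) : nat + M).
have d1 := def_comp s1 dGr.
have d2 := def_comp s2 dD.
have d12 := def_exR (2 * k) k (def_and d1 d2).
apply: def_ext d12 => v /=.
have E0 f : bk 0 (fun j => ev (fun j => if (2 * k <= j) && (j < 2 * k + k) then f j else v j) (s1 j)) = bk 1 v.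
  apply: funext => i; have ik := ltn_ord i; rewrite /blk /s1 /= mul0n add0n mul1n ltn_ord.
  by rewrite ifF //; lia.
have E1 f : bk 1 (fun j => ev (fun j => if (2 * k <= j) && (j < 2 * k + k) then f j else v j) (s1 j)) = pre v.
  apply: funext => i; have ik := ltn_ord i; rewrite /blk /s1 /= mul1n.
  have -> : (k + i < k) = false by lia.
  have -> : (k + i < 2 * k) = true by lia.
  rewrite addKn; have -> : (2 * k <= i) = false by lia.
  by [].
have E2 f : bk 2 (fun j => ev (fun j => if (2 * k <= j) && (j < 2 * k + k) then f j else v j) (s1 j)) = bk 2 (fun j => if (2 * k <= j) && (j < 2 * k + k) then f j else v j).
  apply: funext => i; have ik := ltn_ord i; rewrite /blk /s1 /=.
  have -> : (2 * k + i < k) = false by lia.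
  by have -> : (2 * k + i < 2 * k) = false by lia.
have E3 f : pre (fun j => ev (fun j => if (2 * k <= j) && (j < 2 * k + k) then f j else v j) (s2 j)) = bk 2 (fun j => if (2 * k <= j) && (j < 2 * k + k) then f j else v j).
  by apply: funext => i; have ik := ltn_ord i; rewrite /blk /s2 /=.
split.
  move=> [f [[H0 H1 H2] H3]]; move: H0 H1 H2 H3.
  move: (E0 f) (E1 f) (E2 f) (E3 f) => /= -> -> -> -> H0 H1 H2 H3.
  by split => //; rewrite -H2.
move=> [H0 H1 H2]; pose f0 := (fun j => mul (bk 1 v) (pre v) (ordof (j - 2 * k))).
have E4 : bk 2 (fun j => if (2 * k <= j) && (j < 2 * k + k)
      then f0 j else v j) = mul (bk 1 v) (pre v).
  apply: funext => i; have ik := ltn_ord i; rewrite /blk ifT; last by lia.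
  by rewrite /f0 addKn ordofK.
exists f0; move: (E0 f0) (E1 f0) (E2 f0) (E3 f0) => /= -> -> ->.
by rewrite E4 => ->.
Qed.

Lemma def_trans (D : set ('I_k -> M)) h : defset D -> G h ->
  defset [set g | G g /\ D (mul h g)].
Proof.
move=> dD Gh.
pose sig := fun j => if j < k then (inl j : nat + M) else if j < 2 * k then inr (h (ordof (j - k))) else inl j.
have := def_comp sig (L_mul dD); apply: def_ext => v /=.
have E1 : bk 1 (fun j => ev v (sig j)) = h.
  apply: funext => i; have ik := ltn_ord i; rewrite /blk /sig mul1n.
  have -> : (k + i < k) = false by lia.
  have -> : (k + i < 2 * k) = true by lia.
  by rewrite /= addKn ordofK.
have E2 : pre (fun j => ev v (sig j)) = pre v.
  by apply: funext => i; rewrite /Defs.prefix /sig ltn_ord.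
by rewrite E1 E2; split => [[]|[]].
Qed.

Lemma inst_val (m : nat) (b : 'I_m -> M) n (h : n - k < m) : k <= n ->
  inst k b n = Some (b (Ordinal h)).
Proof. by move=> kn; rewrite /inst kn insubT. Qed.

Lemma inst_lt (m : nat) (b : 'I_m -> M) n : n < k -> inst k b n = None.
Proof. by move=> nk; rewrite /inst leqNgt nk. Qed.

Lemma uex T (U : set_system T) (A : set T) : ProperFilter U -> U A -> exists x, A x.
Proof.
move=> PU UA; apply: contrapT => ne; apply: (@filter_not_empty _ U _).
suff <- : A = set0 by [].
by apply/seteqP; split => // y Ay; apply: ne; exists y.
Qed.

Hypothesis DT : forall p : set (formula M), in_SG G p -> definable_type k p.

Lemma T2 (Y : set ('I_k -> M)) (x : ('I_k -> M) -> bool) : defset Y ->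
  (forall s : seq ('I_k -> M), (forall h, List.In h s -> G h) ->
     exists g, G g /\ forall h, List.In h s -> (Y (mul h g) <-> x h)) ->
  defset [set u | G u /\ x u].
Proof.
move=> dY Hx.
pose S h : set (nat -> M) := [set v | G (pre v) /\ (Y (mul h (pre v)) <-> x h)].
have fI : finI (G : set {classic ('I_k -> M)}) S.
  move=> D' sD'.
  have Hin (h : {classic ('I_k -> M)}) : List.In h (enum_fset D') -> G h.
    by move=> hD; apply/set_mem/sD'; apply/(In_mem h).
  have [g [Gg Hg]] := Hx (enum_fset D') Hin.
  exists (ext g) => h /= hD'; rewrite /S /= pre_ext; split => //; apply: Hg.
  by apply/(In_mem (h : {classic ('I_k -> M)})).
have [U [UU SU]] := ultraFilterLemma (finI_filter fI).
have PU : ProperFilter U by apply: ultra_proper.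
have FU : Filter U by apply: filter_filter.
have SinU h : G h -> U (S h).
  by move=> Gh; apply: SU; exists (S h) => //; apply: finI_from1.
pose p : set (formula M) := fun phi => formula_in k phi /\ U [set v | sat v phi].
have pSG : in_SG G p.
  split; first split.
  - by move=> phi [].
  - move=> n f Hf.
    have := @filter_forall _ 'I_n (fun i => [set v | sat v (f i)]) U FU (fun i => proj2 (Hf i)).
    by move/(uex _) => [v Hv]; exists v.
  - move=> phi Hphi; have [H|H] := in_ultra_setVsetC [set v | sat v phi] UU; [left|right]; split => //.
  have [phi Hphi] := dG.
  exists (fsubst (fun n => if k <= n then Some m0 else None) phi).
  have E v : pre (fun n => odflt (v n) (if k <= n then Some m0 else None)) = pre v.
    by apply: funext => i; rewrite /Defs.prefix leqNgt ltn_ord.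
  have key v : G (pre v) <-> sat v (fsubst (fun n => if k <= n then Some m0 else None) phi).
    by rewrite sat_fsubst -Hphi E.
  split; last exact: key.
  split.
    by move=> n /ffree_fsubst [_]; case: leqP.
  by apply: filterS (SinU one G1) => v [Gv _]; apply/key.
have dtp := DT pSG.
have [S0 [S2k [psi [m' [c [pfpsi fvpsi Hpsi]]]]]] := def_abs m0 (2 * k) (L_mul dY).
pose sig j := (inl (if j < 2 * k then j else if (S0 <= j) && (j < S0 + m') then 2 * k + (j - S0) else 0) : nat + M).
pose phi0 := fcomp sig psi.
have pf0 : fparfree phi0 by apply: fparfree_fcomp => // i _; exists (
  if i < 2 * k then i else if (S0 <= i) && (i < S0 + m') then 2 * k + (i - S0) else 0).
have fv0 : formula_in (k + (k + m')) phi0.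
  move=> n /ffree_fcomp [i _]; rewrite /sig => -[<-].
  by case: ifP; [|case: ifP]; lia.
pose bof (u : 'I_k -> M) : 'I_(k + m') -> M := fun i => if i < k then u (ordof i) else c (i - k).
have key u w : sat w (fsubst (inst k (bof u)) phi0) <-> [/\ G u, G (pre w) & Y (mul u (pre w))].
  rewrite sat_fsubst sat_fcomp.
  pose V := fun j => if j < k then w j else if j < 2 * k then u (ordof (j - k)) else w 0.
  have eB : bk 1 V = u.
    apply: funext => i; have ik := ltn_ord i; rewrite /blk /V mul1n.
    have -> : (k + i < k) = false by lia.
    have -> : (k + i < 2 * k) = true by lia.
    by rewrite addKn ordofK.
  have eP : pre V = pre w by apply: funext => i; rewrite /Defs.prefix /V ltn_ord.
  have := Hpsi V; rewrite eB eP => ->; symmetry.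
  apply: sat_ext_free => n fn; have nb := fvpsi n fn.
  rewrite /sig /=.
  have [nk|kn] := ltnP n k.
    have -> : n < 2 * k by lia.
    have -> : n < S0 by lia.
    by rewrite /= inst_lt // /V nk.
  have [n2k|kn2] := ltnP n (2 * k).
    have h : n - k < k + m' by lia.
    rewrite (inst_val (bof u) h) //= /bof /=.
    have -> : n - k < k by lia.
    have -> : n < S0 by lia.
    by rewrite /V ltnNge kn /= n2k.
  have [nS|Sn] := ltnP n S0.
    by rewrite /= inst_lt // /V ltnNge kn /= ltnNge kn2.
  have -> : (n < S0 + m') = true by lia.
  have h : 2 * k + (n - S0) - k < k + m' by lia.
  rewrite /= (inst_val (bof u) h); last by lia.
  rewrite /= /bof /= ifF; last by lia.
  by congr c; lia.
have fin0 u : formula_in k (fsubst (inst k (bof u)) phi0).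
  move=> n /ffree_fsubst [/fv0 nb]; case: (ltnP n k) => // kn.
  have h : n - k < k + m' by lia.
  by rewrite (inst_val (bof u) h).
have px u : G u -> (x u <-> p (fsubst (inst k (bof u)) phi0)).
  move=> Gu; split.
    move=> xu; split; first exact: fin0.
    by apply: filterS (SinU u Gu) => w [Gw Hw]; apply/key; split => //; apply/Hw.
  move=> [_ Up]; apply: contrapT => nxu.
  have : U ([set w | sat w (fsubst (inst k (bof u)) phi0)] `&` S u) by apply: filterI => //; exact: SinU.
  by move/(uex _) => [w [/key [_ _ Yw] [_ Hw]]]; apply: nxu; apply/Hw.
have Bdef := dtp (k + m') phi0 pf0 fv0.
have dB' := def_comp (fun j => if j < k then (inl j : nat + M) else inr (c (j - k))) Bdef.
apply: def_ext (def_and dG dB') => v /=.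
have E : @Defs.prefix _ _ (k + m') (fun j => ev v (if j < k then (inl j : nat + M) else inr (c (j - k)))) = bof (pre v).
  apply: funext => i; rewrite /Defs.prefix /bof; case: ifP => //= ik.
  by rewrite /ordof val_insubd ik.
rewrite E; split => [[Gv Bv]|[Gv xv]]; split => //; first by apply/px.
by apply/(px _ Gv).
Qed.

Section Flow.
Variables (Y : set ('I_k -> M)).
Hypotheses (dY : defset Y) (YG : Y `<=` G).

Let assoc g h l : G g -> G h -> G l -> mul (mul g h) l = mul g (mul h l).
Proof. by case: DG => _ _ _ H _; apply: H. Qed.
Let idr g : G g -> mul g one = g. Proof. by case: DG => _ _ _ _ H /H []. Qed.

Definition Xcl (z : ('I_k -> M) -> bool) : Prop :=
  (forall h, ~ G h -> z h = false) /\
  (forall s : seq ('I_k -> M), (forall h, List.In h s -> G h) ->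
     exists g, G g /\ forall h, List.In h s -> (Y (mul h g) <-> z h)).
Local Notation X := (cylT Xcl).

Definition shiftf (g : 'I_k -> M) (z : ('I_k -> M) -> bool) : ('I_k -> M) -> bool :=
  fun h => if pselect (G h) then z (mul h g) else z h.

Lemma shiftf_G g z h : G h -> shiftf g z h = z (mul h g).
Proof. by rewrite /shiftf; case: (pselect (G h)). Qed.
Lemma shiftf_nG g z h : ~ G h -> shiftf g z h = z h.
Proof. by rewrite /shiftf; case: (pselect (G h)). Qed.

Lemma Xcl_shift g z : G g -> Xcl z -> Xcl (shiftf g z).
Proof.
move=> Gg [H1 H2]; split.
  by move=> h nGh; rewrite shiftf_nG //; apply: H1.
move=> s sG.
have sG' : forall h, List.In h (map (fun h => mul h g) s) -> G h.
  by move=> h /List.in_map_iff [h' [<- /sG Gh']]; apply: GM.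
have [g' [Gg' Hg']] := H2 _ sG'.
exists (mul g g'); split; first exact: GM.
move=> h hs; have Gh := sG h hs.
rewrite -assoc // shiftf_G //.
by apply: Hg'; apply: List.in_map.
Qed.

Definition act (g : 'I_k -> M) (z : X) : X :=
  match pselect (G g) with
  | left Gg => exist _ (shiftf g (cval z)) (Xcl_shift Gg (proj2_sig z))
  | right _ => z end.

Lemma cval_act g z : G g -> cval (act g z) = shiftf g (cval z).
Proof. by rewrite /act; case: (pselect (G g)). Qed.

Lemma Xcl_closed (z0 : ('I_k -> M) -> bool) :
  (forall s, exists w : X, forall h, List.In h s -> cval w h = z0 h) -> Xcl z0.
Proof.
move=> Hz; split.
  move=> h nGh; have [w Hw] := Hz [:: h]; rewrite -(Hw h) ?inE; last by left.
  by case: w {Hw} => w [H1 _] /=; apply: H1.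
move=> s sG; have [w Hw] := Hz s; case: w Hw => w [_ H2] /= Hw.
have [g [Gg Hg]] := H2 s sG; exists g; split => // h hs.
by rewrite -Hw //; apply: Hg.
Qed.

Lemma flowX : definable_flow G mul one act.
Proof.
split.
- by apply: cyl_compact; apply: Xcl_closed.
- exact: cyl_hausdorff.
- move=> g Gg; apply: (@cyl_continuous _ _ _ (fun h => if pselect (G h) then mul h g else h)).
  by move=> z h; rewrite cval_act //; case: (pselect (G h)) => Gh;
    [rewrite shiftf_G|rewrite shiftf_nG].
- split.
    move=> z; apply: cval_inj; rewrite cval_act //; apply: funext => h.
    by case: (pselect (G h)) => Gh; [rewrite shiftf_G ?idr|rewrite shiftf_nG].
  move=> g h z Gg Gh; apply: cval_inj; rewrite !cval_act //; last exact: GM.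
  apply: funext => u; case: (pselect (G u)) => Gu; last by rewrite !shiftf_nG.
  by rewrite !shiftf_G ?assoc //; apply: GM.
- move=> x C1 C2 cl1 cl2 dis.
  have cpt : compact [set: X] by apply: cyl_compact; apply: Xcl_closed.
  have [l [Hl1 Hl2]] := cyl_separate cpt cl1 cl2 dis.
  pose Dx := [set u | G u /\ cval x u].
  have dDx : defset Dx.
    by apply: (T2 dY); have [_ H2] := proj2_sig x; apply: H2.
  pose Y' := [set g | G g /\ exists2 p, List.In p l &
                 forall h, List.In h p.2 -> cval (act g x) h = cval p.1 h].
  exists Y'; split.
  + have atom h b : def_rel (fun v : nat -> M => G (pre v) /\ cval (act (pre v) x) h = b).
      have [Gh|nGh] := pselect (G h).
        have dT := def_trans dDx Gh.
        case: b.
          apply: def_ext dT => v /=; split => -[Gv H]; split => //; move: H.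
            by move=> [_ xh]; rewrite cval_act // shiftf_G.
          by rewrite cval_act // shiftf_G // => xh; split => //; apply: GM.
        apply: def_ext (def_and dG (def_not dT)) => v /=; split => -[Gv H]; split => //.
          move: H; rewrite cval_act // shiftf_G // => H.
          by apply/negbTE/negP => xh; apply: H; split => //; split => //; apply: GM.
        by move=> [_ [_ xh]]; move: H; rewrite cval_act // shiftf_G // xh.
      have [E|NE] := boolP (cval x h == b).
        apply: def_ext dG => v /=; split => [Gv|[]//]; split => //.
        by rewrite cval_act // shiftf_nG //; apply/eqP.
      apply: (def_ext (P := fun _ => False)); last exact: def_false.
      move=> v /=; split => // -[Gv].
      rewrite cval_act // shiftf_nG // => E.
      by move: NE; rewrite E eqxx.
    have := def_and dG (def_exl l (fun p => def_all p.2 (fun h => atom h (cval p.1 h)))).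
    apply: def_ext => v /=; split.
      move=> [Gv [p pl Hp]]; split => //; exists p => // h hp.
      by have [] := Hp h hp.
    move=> [Gv [p pl Hp]]; split => //; exists p => // h hp.
    by split => //; apply: Hp.
  + by move=> g [].
  + move=> g Gg C1g; split => //.
    by have [p pl Hp] := Hl1 _ C1g; exists p.
  + by move=> g Gg [_ [p pl Hp]]; apply: (Hl2 p pl).
Qed.

Lemma Xcl_Y : Xcl (fun h => asbool (Y h)).
Proof.
split.
  by move=> h nGh; case: asboolP => // /YG.
move=> s sG; exists one; split => // h hs.
rewrite idr; last exact: sG.
by split => [Yh|/asboolP //]; apply/asboolP.
Qed.

End Flow.

Let assoc' g h l : G g -> G h -> G l -> mul (mul g h) l = mul g (mul h l).
Proof. by case: DG => _ _ _ H _; apply: H. Qed.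
Let idl' g : G g -> mul one g = g. Proof. by case: DG => _ _ _ _ H /H []. Qed.
Let idr' g : G g -> mul g one = g. Proof. by case: DG => _ _ _ _ H /H []. Qed.
Let invl' g : G g -> mul (inv g) g = one. Proof. by case: DG => _ _ _ _ H /H []. Qed.
Let invr' g : G g -> mul g (inv g) = one. Proof. by case: DG => _ _ _ _ H /H []. Qed.
Let GI' g : G g -> G (inv g). Proof. by case: DG => _ _ [_ []] ? ?; auto. Qed.

Lemma fwd_dir : definably_extremely_amenable G mul one ->
  forall Y, defset Y -> Y `<=` G -> left_generic G mul Y ->
     [set mul y (inv z) | y in Y & z in Y] = G.
Proof.
move=> DEA Y dY YG [n [gs [Ggs cov]]].
have [z fz] := DEA _ (@act Y) (ex_intro _ (exist _ _ (Xcl_Y YG)) I) (flowX dY).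
have cst h g : G h -> G g -> cval z (mul h g) = cval z h.
  by move=> Gh Gg; rewrite -{2}(fz g Gg) cval_act // shiftf_G.
have cone h : G h -> cval z h = cval z one.
  by move=> Gh; rewrite -(cst one h) ?idl'.
have [_ Hz] := proj2_sig z.
apply/seteqP; split.
  by move=> _ [y Yy [w Yw <-]]; apply: GM; [exact: YG|apply: GI'; exact: YG].
move=> g0 Gg0; case E: (cval z one).
  have sG : forall h, List.In h [:: g0; one] -> G h by move=> h [<-|[<-|[]]].
  have [g [Gg Hg]] := Hz [:: g0; one] sG.
  have c0 : cval z g0 = true by rewrite (cone _ Gg0).
  have Y1 : Y (mul g0 g) by apply/(Hg g0); [left|exact: c0].
  have Y2 : Y g by rewrite -(idl' Gg); apply/(Hg one); [right; left|exact: E].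
  exists (mul g0 g) => //; exists g => //.
  by rewrite assoc' ?invr' ?idr' //; apply: GI'.
pose s := [seq inv (gs i) | i <- enum 'I_n].
have sG : forall h, List.In h s -> G h.
  by move=> h /List.in_map_iff [i [<- _]]; apply: GI'.
have [g [Gg Hg]] := Hz s sG.
have [i [y [Yy eg]]] := cov g Gg.
have Yy' : Y (mul (inv (gs i)) g).
  by rewrite eg -assoc' ?invl' ?idl' //; [exact: YG|apply: GI'|exact: YG].
have Hin : List.In (inv (gs i)) s.
  by apply: List.in_map; apply/(In_mem i); exact: mem_enum.
have c1 : cval z (inv (gs i)) = false by rewrite (cone _ (GI' (Ggs i))) E.
by have := proj1 (Hg _ Hin) Yy'; rewrite -[sval z _]/(cval z _) c1.
Qed.

End Fwd.

Section Back.
Variables (L : language) (M : structure L) (k : nat).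
Variables (G : set ('I_k -> M)) (mul : ('I_k -> M) -> ('I_k -> M) -> ('I_k -> M))
  (one : 'I_k -> M) (inv : ('I_k -> M) -> ('I_k -> M)).
Hypothesis DG : definable_group G mul one inv.

Let G1 : G one. Proof. by case: DG => _ _ [] //. Qed.
Let GM g h : G g -> G h -> G (mul g h). Proof. by case: DG => _ _ [_ []] ? ?; auto. Qed.
Let GI g : G g -> G (inv g). Proof. by case: DG => _ _ [_ []] ? ?; auto. Qed.
Let assoc g h l : G g -> G h -> G l -> mul (mul g h) l = mul g (mul h l).
Proof. by case: DG => _ _ _ H _; apply: H. Qed.
Let idl g : G g -> mul one g = g. Proof. by case: DG => _ _ _ _ H /H []. Qed.
Let idr g : G g -> mul g one = g. Proof. by case: DG => _ _ _ _ H /H []. Qed.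
Let invl g : G g -> mul (inv g) g = one. Proof. by case: DG => _ _ _ _ H /H []. Qed.
Let invr g : G g -> mul g (inv g) = one. Proof. by case: DG => _ _ _ _ H /H []. Qed.

Lemma back_dir :
  (forall Y, defset Y -> Y `<=` G -> left_generic G mul Y ->
     [set mul y (inv z) | y in Y & z in Y] = G) ->
  definably_extremely_amenable G mul one.
Proof.
move=> HC X act [x0 _] [cpt hs cont [act1 actM] dmap].
pose P := [set O : set X | [/\ open O,
   (forall g z, G g -> ~ O z -> ~ O (act g z)) & exists z, ~ O z]].
have [A [[oA invA [a0 na0]] maxA]] : exists A, P A /\ forall B, A `<` B -> ~ P B.
  apply: Zorn_bigcup => F FP Ftot; split.
  - by apply: bigcup_open => O /FP [].
  - move=> g z Gg nz [O FO Ogz]; apply: nz; exists O => //.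
    apply: contrapT => nOz; have [_ + _] := FP _ FO.
    by move=> /(_ g z Gg nOz).
  - have [[O0 FO0]|F0] := pselect (exists O, F O); last first.
      by exists x0 => -[O FO _]; apply: F0; exists O.
    pose FF := filter_from F (fun O => ~` O).
    have FFF : Filter FF.
      apply: filter_from_filter; first by exists O0.
      move=> O1 O2 F1 F2; have [O12|O21] := Ftot _ _ F1 F2.
        by exists O2 => // z nz; split => // ?; apply/nz/O12.
      by exists O1 => // z nz; split => // ?; apply/nz/O21.
    have PFF : ProperFilter FF.
      by apply: filter_from_proper => O /FP [_ _ [z nz]]; exists z.
    have [z [_ clz]] := cpt FF PFF (filterT).
    exists z => -[O FO Oz].
    have /FP [oO _ _] := FO.
    have [y [ny Oy]] := clz (~` O) O (ex_intro2 _ _ O FO (fun _ h => h))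
       (open_nbhs_nbhs (conj oO Oz)).
    exact: ny Oy.
pose K := ~` A.
have Kinv g z : G g -> K z -> K (act g z) by move=> Gg; exact: invA.
have clK : closed K by rewrite /K closedC.
have rec (V : set X) : open V -> V a0 -> forall z, K z -> exists h, G h /\ V (act h z).
  move=> oV Va z Kz; apply: contrapT => nex.
  pose W := K `&` \bigcap_(h in G) (act h @^-1` (~` V)).
  have clW : closed W.
    apply: closedI => //; apply: closed_bigI => h Gh.
    by move: (cont h Gh) => /continuous_closedP; apply; rewrite closedC.
  have PW : P (~` W).
    split; first by rewrite openC.
    - move=> g y Gg; rewrite /W /= => /contrapT [Ky Hy] [].
      split; first exact: Kinv.
      by move=> h Gh /=; rewrite -actM //; apply: Hy; exact: GM.
    - exists z => nW; apply: nW; split => // h Gh Vh; apply: nex; by exists h.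
  apply: (maxA _ _ PW); split.
    by move=> y Ay [Ky _]; exact: Ky Ay.
  move=> WA; apply: na0; apply: WA.
  by move=> [_ /(_ one G1)]; rewrite /= act1.
exists a0 => g Gg; apply: contrapT => ne.
have hs2 := hs; rewrite open_hausdorff in hs2; have /eqP := ne.
move=> /(hs2 _ _) [[O2 O1] /= [] O2g O1a [oO2 oO1 /eqP O12]].
move/set_mem: O2g => O2g; move/set_mem: O1a => O1a.
pose U := O1 `&` (act g @^-1` O2).
have oU : open U by apply: openI => //; move: (cont g Gg) => /continuousP; apply.
have Ua : U a0 by split.
have [W0 [W0a W0U]] : exists W0, nbhs a0 W0 /\ closure W0 `<=` U.
  have NT : nbhs a0 (setT : set X) by apply: filterT.
  have := @compact_regular X a0 setT hs cpt NT.
  move=> /(_ U (open_nbhs_nbhs (conj oU Ua))) [W0 W0a W0U]; by exists W0.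
move: W0a; rewrite nbhsE => -[V [oV Va] VW0].
have clVU : closure V `<=` U := subset_trans (closureS VW0) W0U.
have dis : closure V `&` ~` U = set0.
  by apply/seteqP; split => [y [h1 h2]|//]; exact: h2 (clVU _ h1).
have [A0 [dA0 A0G A0in A0out]] := dmap a0 (closure V) (~` U)
   (@closed_closure _ V) (open_closedC oU) dis.
have cptK : compact K := subclosed_compact clK cpt (fun _ _ => I).
have [D' sD' cov] : finite_subset_cover (G : set {classic ('I_k -> M)})
    (fun h : {classic ('I_k -> M)} => act h @^-1` V) K.
  apply: (compact_cover' x0 cptK).
  - by move=> h Gh; move: (cont h Gh) => /continuousP; apply.
  - by move=> z Kz; have [h [Gh Vh]] := rec V oV Va z Kz; exists h.
have genA0 : left_generic G mul A0.
  pose s := enum_fset D'.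
  exists (size s), (fun i => inv (nth one s i)); split.
    move=> i; apply: GI; have := mem_nth (one : {classic ('I_k -> M)}) (ltn_ord i).
    by move=> /sD' /set_mem.
  move=> g' Gg'; have [h hD' Vh] := cov (act g' a0) (Kinv g' a0 Gg' na0).
  have hs' : h \in s by [].
  have ih : index h s < size s by rewrite index_mem.
  exists (Ordinal ih : 'I_(size s)) ;
    rewrite /= (nth_index (one : {classic ('I_k -> M)}) hs').
  have Gh : G h by apply/set_mem/sD'.
  exists (mul h g'); split.
    apply: A0in; first exact: GM.
    by apply: subset_closure; rewrite actM.
  by rewrite -assoc ?invl ?idl //; apply: GI.
have HCe := HC A0 dA0 A0G genA0.
have : G (inv g) by apply: GI.
rewrite -HCe => -[a Aa [b Ab eab]].
have Ga := A0G _ Aa; have Gb := A0G _ Ab.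
have ea : a = mul (inv g) b.
  by rewrite -eab assoc ?invl ?idr //; apply: GI.
have Ua' : U (act a a0) by apply: contrapT; apply: A0out.
have Ub' : U (act b a0) by apply: contrapT; apply: A0out.
move: Ua'; rewrite ea actM //; last exact: GI.
move=> [_ /=]; rewrite -actM ?invr ?act1 //; last exact: GI.
move=> O2b; case: Ub' => O1b _.
have : (O2 `&` O1) (act b a0) by split.
by rewrite O12.
Qed.
End Back.

Lemma eq_I0 (L : language) (M : structure L) (f g : 'I_0 -> M) : f = g.
Proof. by apply: funext => -[]. Qed.

Lemma k0_case (L : language) (M : structure L) (G : set ('I_0 -> M))
  (mul : ('I_0 -> M) -> ('I_0 -> M) -> ('I_0 -> M)) (one : 'I_0 -> M)
  (inv : ('I_0 -> M) -> ('I_0 -> M)) (Y : set ('I_0 -> M)) :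
  definable_group G mul one inv -> left_generic G mul Y ->
  [set mul y (inv z) | y in Y & z in Y] = G.
Proof.
move=> DG [n [gs [_ cov]]]; have G1 : G one by case: DG => _ _ [].
have [i [y [Yy _]]] := cov one G1.
apply/seteqP; split.
  by move=> _ [y' _ [z' _ <-]]; rewrite (eq_I0 (mul y' (inv z')) one).
by move=> g _; exists y => //; exists y => //; apply: eq_I0.
Qed.

Unset Implicit Arguments.
Set Strict Implicit.

Theorem proposition3p17 (L : language) (M : structure L) (k : nat)
  (G : set ('I_k -> M))
  (mul : ('I_k -> M) -> ('I_k -> M) -> ('I_k -> M))
  (one : 'I_k -> M) (inv : ('I_k -> M) -> ('I_k -> M)) :
  definable_group G mul one inv ->
  (forall p : set (formula M), in_SG G p -> definable_type k p) ->
  (definably_extremely_amenable G mul one <->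
   forall Y : set ('I_k -> M), defset Y -> Y `<=` G -> left_generic G mul Y ->
     [set mul y (inv z) | y in Y & z in Y] = G).
Proof.
move=> DG DT; split; last exact: back_dir.
move=> DEA Y dY YG gen.
revert G mul one inv DG DT DEA Y dY YG gen.
destruct k as [|k]; intros G mul one inv DG DT DEA Y dY YG gen.
  exact: k0_case DG gen.
exact: (fwd_dir DG (ltn0Sn k) DT DEA dY YG gen).
Qed.
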